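(* Let $(y_k)_{k\in\mathbb{N}}$ be a sequence in $\mathbb{W}$ with $y_k\in\mathbb{W}_{N(y_k)}$ and $N(y_k)\to\infty$. Let $(\mu,\nu)$ be a pair of diffuse probability measures on $[0,1]$ with $\frac12(\mu+\nu)=\lambda$ (Lebesgue measure on $[0,1]$), and let $y$ be the point of the Doob--Martin boundary corresponding to $(\mu,\nu)$. Then $y_k\to y$ in the Doob--Martin topology if and only if \[ \lim_{k\to\infty}\frac{\binom{y_k}{w}}{\binom{N(y_k)}{m}^2} = \mu^{\otimes m}\otimes\nu^{\otimes m}(\mathcal{S}(w)) \] for all $w\in\mathbb{W}_m$ and all $m\in\mathbb{N}$. Equivalently, $y_k\to y$ if and only if for each $m\in\mathbb{N}$ the random word in $\mathbb{W}_m$ obtained by selecting $m$ letters $a$ and $m$ letters $b$ uniformly at random from $y_k$ and keeping their relative order converges in distribution as $k\to\infty$ to $\mathcal{W}((X_1,\dots,X_m,Y_1,\dots,Y_m))$, where $X_1,X_2,\dots$ are i.i.d. with law $\mu$, $Y_1,Y_2,\dots$ are i.i.d. with law $\nu$, and the two sequences are independent.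
   Context: $\mathbb{W}_n$ is the set of words over $\{a,b\}$ with $n$ letters $a$ and $n$ letters $b$, $\mathbb{W}=\bigsqcup_n\mathbb{W}_n$, and $N(w)=n$ for $w\in\mathbb{W}_n$. $\binom{w}{v}$ is the number of occurrences of $v$ as a (not necessarily contiguous) sub-word of $w$. The Markov chain on $\mathbb{W}$ starts at the empty word and, from a word in $\mathbb{W}_n$, inserts a letter $a$ uniformly at random into one of the $2n+1$ slots and then a letter $b$ uniformly into one of the $2n+2$ slots. Its Doob--Martin kernel with reference state the empty word is $K(v,w)=\binom{w}{v}\binom{2m}{m}/\binom{m+n}{m}^2$ for $v\in\mathbb{W}_m$, $w\in\mathbb{W}_{m+n}$ (and $0$ if $N(w)<N(v)$). The Doob--Martin compactification is the closure of $\{K(\cdot,w):w\in\mathbb{W}\}$ in $\mathbb{R}_+^{\mathbb{W}}$ (pointwise convergence): $w_k\to z$ iff $K(v,w_k)\to K(v,z)$ for every $v\in\mathbb{W}$, where $K(\cdot,z)$ is the extended kernel; the boundary consists of the limit points not in $\mathbb{W}$. For $(x_1,\dots,x_n,y_1,\dots,y_n)\in\mathbb{R}^{2n}$ with distinct entries, listing the entries in increasing order as $z_1<\dots<z_{2n}$, $\mathcal{W}((x_1,\dots,x_n,y_1,\dots,y_n))=u_1\cdots u_{2n}\in\mathbb{W}_n$ with $u_i=a$ if $z_i\in\{x_1,\dots,x_n\}$ and $u_i=b$ if $z_i\in\{y_1,\dots,y_n\}$; for $v\in\mathbb{W}_n$, $\mathcal{S}(v):=\mathcal{W}^{-1}(\{v\})\subset\mathbb{R}^{2n}$.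 The boundary point corresponding to $(\mu,\nu)$ is the boundary point $y$ whose extended kernel is $K(w,y)=\binom{2m}{m}\mu^{\otimes m}\otimes\nu^{\otimes m}(\mathcal{S}(w))$ for $w\in\mathbb{W}_m$, $m\in\mathbb{N}_0$. *)

(* Defs.v *)
From HB Require Import structures.
From mathcomp Require Import all_boot all_order all_algebra.
From mathcomp Require Import all_classical all_reals all_analysis.
Set Implicit Arguments. Unset Strict Implicit. Unset Printing Implicit Defensive.
Import Order.TTheory GRing.Theory Num.Theory.
Import numFieldNormedType.Exports.
Local Open Scope classical_set_scope.
Local Open Scope ring_scope.

(* Words over {a,b} are bit sequences: letter a = true, letter b = false. *)

Definition inW (n : nat) (w : seq bool) : bool :=
  (count id w == n) && (count negb w == n).

Definition inWall (w : seq bool) : bool := count id w == count negb w.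

Definition Nw (w : seq bool) : nat := count id w.

(* binom(w, v) : number of occurrences of v as a (not necessarily contiguous)
   sub-word of w, i.e. number of choices of positions (masks) of w that
   spell v. *)
Definition occ (w v : seq bool) : nat :=
  #|[pred t : (size w).-tuple bool | mask t w == v]|.

(* Doob--Martin kernel K(v, w) with reference state the empty word. *)
Definition DMkernel {R : realType} (v w : seq bool) : R :=
  if (Nw v <= Nw w)%N then
    (occ w v)%:R * ('C((Nw v).*2, Nw v))%:R / ((('C(Nw w, Nw v))%:R) ^+ 2)
  else 0.

(* Convergence of a sequence of words to a point of the Doob--Martin
   compactification, the latter being identified with its (extended)
   kernel function v |-> K(v, z) (pointwise convergence on W). *)
Definition DMconv {R : realType} (y : nat -> seq bool) (Kz : seq bool -> R) :
    Prop :=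
  forall v, inWall v -> (fun k => DMkernel (R := R) v (y k)) @ \oo --> Kz v.

(* The map \mathcal{W}: for l = (x_1..x_n, y_1..y_n) (first n entries are the
   x's), sort the entries increasingly and record a (true) for an x and
   b (false) for a y. *)
Definition Wmap {R : realType} (n : nat) (l : seq R) : seq bool :=
  map snd (sort (fun p q : R * bool => p.1 <= q.1)
             ([seq (x, true) | x <- take n l] ++ [seq (x, false) | x <- drop n l])).

Definition Sset {R : realType} (n : nat) (w : seq bool) : set (seq R) :=
  [set l | size l = n.*2 /\ uniq l /\ Wmap n l = w].

(* Iterated integral \int[m_1]_{x_1} ... \int[m_k]_{x_k} f [:: x_1; ..; x_k];
   for nonnegative measurable f this is the integral of f against the
   product measure m_1 \otimes ... \otimes m_k (Tonelli). *)
Fixpoint iint {R : realType} (ms : seq {measure set R -> \bar R})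
    (f : seq R -> \bar R) : \bar R :=
  match ms with
  | [::] => f [::]
  | m :: ms' => (\int[m]_x iint ms' (fun l => f (x :: l)))%E
  end.

Definition prodS {R : realType} (mu nu : {measure set R -> \bar R})
    (n : nat) (w : seq bool) : R :=
  fine (iint (nseq n mu ++ nseq n nu) (fun l => (\1_(Sset n w) l)%:E)).

Definition boundaryKernel {R : realType} (mu nu : {measure set R -> \bar R})
    (w : seq bool) : R :=
  ('C((Nw w).*2, Nw w))%:R * prodS mu nu (Nw w) w.

(* Law of the random word in W_m obtained from y by selecting uniformly at
   random m letters a and m letters b of y (keeping their relative order):
   P(w) = #{selections spelling w} / #{selections}. *)
Definition sampleLaw {R : realType} (y : seq bool) (m : nat) (w : seq bool) : R :=
  (#|[pred t : (size y).-tuple bool | inW m (mask t y) && (mask t y == w)]|)%:R /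
  (#|[pred t : (size y).-tuple bool | inW m (mask t y)]|)%:R.

(* Convergence in distribution of random elements of the finite discrete
   space W_m (words of length 2m), given by their laws P_k, P:
   E[f(Z_k)] -> E[f(Z)] for every (necessarily bounded continuous) f. *)
Definition cvg_dist_words {R : realType} (m : nat) (Pk : nat -> seq bool -> R)
    (P : seq bool -> R) : Prop :=
  forall f : seq bool -> R,
    (fun k => \sum_(t : (m.*2).-tuple bool) f t * Pk k t) @ \oo -->
      \sum_(t : (m.*2).-tuple bool) f t * P t.

Definition diffuse {R : realType} (mu : {measure set R -> \bar R}) : Prop :=
  forall x : R, mu [set x] = 0%E.

(* Main.v *)
Require Import Defs.
From HB Require Import structures.
From mathcomp Require Import all_boot all_order all_algebra.
From mathcomp Require Import all_classical all_reals all_analysis.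
Import Order.TTheory GRing.Theory Num.Theory.
Import numFieldNormedType.Exports.
Local Open Scope classical_set_scope.
Local Open Scope ring_scope.

Local Close Scope ring_scope.

Lemma card_tuple_split n (P : seq bool -> bool) :
  #|[pred t : n.+1.-tuple bool | P t]| =
  #|[pred t : n.-tuple bool | P (true :: t)]| + #|[pred t : n.-tuple bool | P (false :: t)]|.
Proof.
rewrite -!sum1_card !(big_mkcond (fun t => t \in _)) /=.
rewrite (reindex (fun p : bool * n.-tuple bool => [tuple of p.1 :: p.2])) /=; last first.
  exists (fun t : n.+1.-tuple bool => (thead t, behead_tuple t)).
    by move=> [b t] _; congr pair; apply: val_inj.
  by move=> t _; apply: val_inj => /=; rewrite [in RHS](tuple_eta t).
rewrite -(pair_bigA _ (fun b (t : n.-tuple bool) => if [tuple of b :: t] \in [pred t : n.+1.-tuple bool | P t] then 1 else 0)) /=.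
rewrite big_bool /= addnC.
by [].
Qed.

Lemma cnt_masks (y : seq bool) i j :
  #|[pred t : (size y).-tuple bool |
     (count id (mask t y) == i) && (count negb (mask t y) == j)]| =
  'C(count id y, i) * 'C(count negb y, j).
Proof.
elim: y i j => [|x y IH] i j.
  have m0 (m : seq bool) : mask m [::] = [::] by case: m.
  rewrite (eq_card (B := [pred t : 0.-tuple bool | (0 == i) && (0 == j)])); last by move=> t; rewrite !inE m0.
  case: i => [|i]; case: j => [|j] /=.
  - by rewrite (eq_card (B := predT)) // -[#|predT|]/(#|{: 0.-tuple bool}|) card_tuple.
  - by rewrite muln0 (eq_card0 (A := pred0)).
  - by rewrite (eq_card0 (A := pred0)).
  - by rewrite (eq_card0 (A := pred0)).
rewrite (card_tuple_split (size y) (fun s => (count id (mask s (x :: y)) == i) && (count negb (mask s (x :: y)) == j))) /=.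
case: x => /=.
  case: i => [|i].
    rewrite (eq_card0 (A := pred0)) // add0n bin0 IH bin0 //.
  rewrite add1n.
  rewrite (eq_card (B := [pred t : (size y).-tuple bool | (count id (mask t y) == i) && (count negb (mask t y) == j)])); last by move=> t; rewrite !inE /= add1n eqSS.
  rewrite IH IH binS mulnDl addnC.
  by rewrite add0n.
case: j => [|j].
  rewrite eq_card0; first by rewrite add0n IH !bin0 add0n.
  by move=> t; rewrite !inE /= add1n andbF.
rewrite (eq_card (B := [pred t : (size y).-tuple bool | (count id (mask t y) == i) && (count negb (mask t y) == j)])); last by move=> t; rewrite !inE /= add1n eqSS.
by rewrite !IH add0n add1n binS mulnDr addnC.
Qed.

Lemma cnt_W (y : seq bool) m : inWall y ->
  #|[pred t : (size y).-tuple bool | inW m (mask t y)]| = 'C(Nw y, m) * 'C(Nw y, m).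
Proof.
move=> /eqP Hy; rewrite -{2}/(Nw y) {2}/Nw Hy -cnt_masks.
by apply: eq_card => t.
Qed.

Local Open Scope ring_scope.

Section Main.
Variable R : realType.

Lemma sampleLawE (y : seq bool) m w : inWall y ->
  sampleLaw (R := R) y m w =
  if inW m w then (occ y w)%:R / (('C(Nw y, m))%:R ^+ 2) else 0.
Proof.
move=> Hy; rewrite /sampleLaw cnt_W // natrM -expr2.
case: ifP => Hw.
  congr (_%:R / _); rewrite /occ; apply: eq_card => t; rewrite !inE.
  by case: eqP => [->|_]; rewrite ?Hw ?andbT ?andbF.
rewrite eq_card0 ?mul0r // => t; rewrite !inE.
by case: eqP => [->|_]; rewrite ?Hw ?andbT ?andbF.
Qed.

Lemma iint0 (ms : seq {measure set R -> \bar R}) (f : seq R -> \bar R) :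
  (forall l, f l = 0%E) -> iint ms f = 0%E.
Proof.
elim: ms f => [|m ms IH] f Hf /=; first exact: Hf.
have -> : (fun x => iint ms (fun l => f (x :: l))) = fun _ => 0%E.
  by apply: funext => x; apply: IH.
exact: integral0.
Qed.

Lemma Wmap_inW m (l : seq R) : size l = m.*2 -> inW m (Wmap m l).
Proof.
move=> Hl; rewrite /inW /Wmap !count_map.
set s := (_ ++ _).
have P : perm_eq (sort (fun p q : R * bool => p.1 <= q.1) s) s by rewrite perm_sort.
move/permP: P => P; rewrite !P /s !count_cat !count_map.
have Hm : (m <= size l)%N by rewrite Hl -addnn leq_addr.
rewrite (@eq_count _ (preim (pair^~ true) (preim snd id)) predT) //.
rewrite (@eq_count _ (preim (pair^~ false) (preim snd id)) pred0) //.
rewrite (@eq_count _ (preim (pair^~ true) (preim snd negb)) pred0) //.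
rewrite (@eq_count _ (preim (pair^~ false) (preim snd negb)) predT) //.
rewrite !count_pred0 !count_predT size_takel // size_drop Hl -addnn addnK.
by rewrite addn0 add0n !eqxx.
Qed.

Lemma prodS0 (mu nu : {measure set R -> \bar R}) m w :
  ~~ inW m w -> prodS mu nu m w = 0.
Proof.
move=> Hw; rewrite /prodS iint0 // => l.
rewrite indicE memNset //= => -[Hs [_ Hm]].
by move: Hw; rewrite -Hm Wmap_inW.
Qed.

Lemma cvg_sumR (I : Type) (r : seq I) (F : I -> nat -> R) (l : I -> R) :
  (forall i, F i @ \oo --> l i) ->
  (fun k => \sum_(i <- r) F i k) @ \oo --> \sum_(i <- r) l i.
Proof.
move=> H; elim: r => [|i r IH].
  rewrite big_nil; under eq_cvg do rewrite big_nil; exact: cvg_cst.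
rewrite big_cons; under eq_cvg do rewrite big_cons.
exact: cvgD.
Qed.

Lemma sum_pick n (w : seq bool) (F : seq bool -> R) : size w = n ->
  \sum_(t : n.-tuple bool) ((val t == w)%:R * F t) = F w.
Proof.
move=> Hw.
have Hw' : size w == n by rewrite Hw.
rewrite (bigD1 (Tuple Hw')) //= eqxx mul1r big1 ?addr0 // => t Ht.
suff -> : (val t == w) = false by rewrite mul0r.
apply/negbTE; apply: contra Ht => /eqP Htw; apply/eqP; apply: val_inj.
by rewrite /= Htw.
Qed.

Lemma inW_Nw m w : inW m w -> Nw w = m.
Proof. by case/andP => /eqP. Qed.

Lemma inW_size m w : inW m w -> size w = m.*2.
Proof.
case/andP => /eqP H1 /eqP H2.
by rewrite -(count_predC id) -addnn H1 -H2.
Qed.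

Lemma inWall_inW w : inWall w -> inW (Nw w) w.
Proof. by move=> /eqP H; rewrite /inW /Nw H eqxx. Qed.

End Main.

Theorem mainTheorem7 (R : realType) (y : nat -> seq bool)
    (mu nu : probability R R) :
  (forall k, inWall (y k)) ->
  (forall M : nat, exists k0 : nat, forall k, (k0 <= k)%N -> (M <= Nw (y k))%N) ->
  diffuse mu -> diffuse nu ->
  mu (~` `[0%R, 1%R]) = 0%E -> nu (~` `[0%R, 1%R]) = 0%E ->
  (forall A : set R, measurable A ->
     ((mu A + nu A) * (2^-1)%:E = lebesgue_measure (A `&` `[0%R, 1%R]))%E) ->
  (DMconv y (boundaryKernel mu nu) <->
     (forall (m : nat) (w : seq bool), inW m w ->
        (fun k => (occ (y k) w)%:R / (('C(Nw (y k), m))%:R ^+ 2) : R) @ \oo -->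
          prodS mu nu m w))
  /\
  (DMconv y (boundaryKernel mu nu) <->
     (forall m : nat,
        cvg_dist_words m (fun k => sampleLaw (y k) m) (prodS mu nu m))).

Proof.
move=> Hall HN _ _ _ _ _.
set G := fun (m : nat) (w : seq bool) =>
  (fun k => (occ (y k) w)%:R / (('C(Nw (y k), m))%:R ^+ 2) : R) @ \oo --> prodS mu nu m w.
have Ev : forall m : nat, \forall k \near \oo, (m <= Nw (y k))%N.
  move=> m; have [k0 Hk0] := HN m; by exists k0 => // k /= /Hk0.
have C2nz : forall m : nat, ('C(m.*2, m))%:R != 0 :> R.
  by move=> m; rewrite pnatr_eq0 -lt0n bin_gt0 -addnn leq_addr.
have Kev : forall w, \forall k \near \oo,
   DMkernel (R := R) w (y k) =
   ('C((Nw w).*2, Nw w))%:R * ((occ (y k) w)%:R / (('C(Nw (y k), Nw w))%:R ^+ 2)).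
  move=> w; apply: filterS (Ev (Nw w)) => k Hk.
  by rewrite /DMkernel Hk mulrA [_%:R * _%:R]mulrC.
have P1 : DMconv y (boundaryKernel mu nu) <-> (forall m w, inW m w -> G m w).
  split.
    move=> H m w Hw; rewrite /G.
    have Hm := inW_Nw _ _ Hw; subst m.
    have Hwall : inWall w by case/andP: Hw => _ /eqP H2; rewrite /inWall H2 /Nw eqxx.
    have H1 := H w Hwall.
    have H2 : (fun k => ('C((Nw w).*2, Nw w))%:R^-1 * DMkernel (R := R) w (y k)) @ \oo --> prodS mu nu (Nw w) w.
      have := @cvgMl_tmp R nat \oo _ _ (('C((Nw w).*2, Nw w))%:R^-1) _ H1.
      by rewrite /boundaryKernel mulrA mulVf ?mul1r //; apply; typeclasses eauto.
    apply: (cvg_trans _ H2); apply: near_eq_cvg; apply: filterS (Kev w) => k ->.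
    by rewrite mulrA mulVf ?mul1r.
  move=> H v Hv.
  have Hw := inWall_inW _ Hv.
  have H1 := H _ _ Hw.
  have H2 := @cvgMl_tmp R nat \oo _ _ (('C((Nw v).*2, Nw v))%:R) _ H1.
  apply: (cvg_trans _ (H2 _)); apply: near_eq_cvg; apply: filterS (Kev v) => k ->.
  by [].
split => //.
rewrite P1; split.
  move=> H m f.
  apply: cvg_sumR => t.
  apply: cvgMl_tmp.
  under eq_cvg do rewrite sampleLawE //.
  case Ht: (inW m t); first exact: H.
  rewrite prodS0 ?Ht //; exact: cvg_cst.
move=> H m w Hw.
have Hs := inW_size _ _ Hw.
have := H m (fun s => (s == w)%:R).
rewrite (sum_pick _ _ _ _ Hs).
under eq_cvg do rewrite (sum_pick _ _ _ _ Hs) sampleLawE // Hw.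
by [].
Qed.
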